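(* Let $\mathcal{A}$ be a semi-abelian category, and let $m:I\to A$ be a kernel (equivalently, a normal monic) in $\mathcal{A}$. The following are equivalent: (1) $m$ is an essential monic; (2) whenever $f:A\to B$ is an arrow such that $fm$ is a normal monic, $f$ is monic; (3) if $g:J\to A$ is a normal monic with $g\perp m$, then $g=0$ (i.e. $J$ is a zero object).
   Context: In a semi-abelian category, normal monics coincide with kernels; the ideals of an object $A$ are the subobjects of $A$ represented by normal monics with target $A$, and they form a bounded lattice. For normal monics (ideals) $g,m$ with target $A$, write $g\perp m$ if their meet in the lattice of ideals of $A$ is $0$ (equivalently, the pullback of $g$ and $m$ is a zero object). An arrow $m$ is an essential monic if $m$ is monic and for every arrow $g$ such that $gm$ is defined and monic, $g$ is monic. *)

(* Defs.v *)
Record Cat := {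
  Ob :> Type;
  Hom : Ob -> Ob -> Type;
  idm : forall a, Hom a a;
  comp : forall a b c, Hom b c -> Hom a b -> Hom a c;
  comp_id_l : forall a b (f : Hom a b), comp a b b (idm b) f = f;
  comp_id_r : forall a b (f : Hom a b), comp a a b f (idm a) = f;
  comp_assoc : forall a b c d (h : Hom c d) (g : Hom b c) (f : Hom a b),
      comp a c d h (comp a b c g f) = comp a b d (comp b c d h g) f
}.

Arguments Hom : clear implicits.
Arguments idm {c0} a.
Arguments comp {c0 a b c} _ _.

Declare Scope cat_scope.
Notation "g ∘ f" := (comp g f) (at level 40, left associativity) : cat_scope.
Open Scope cat_scope.

Section Notions.
Variable C : Cat.

Definition monic {a b : C} (f : Hom C a b) : Prop :=
  forall x (u v : Hom C x a), f ∘ u = f ∘ v -> u = v.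

Definition is_iso {a b : C} (f : Hom C a b) : Prop :=
  exists g : Hom C b a, g ∘ f = idm a /\ f ∘ g = idm b.

Definition is_initial (Z : C) : Prop :=
  forall X : C, (exists f : Hom C Z X, True) /\ (forall f g : Hom C Z X, f = g).
Definition is_terminal (Z : C) : Prop :=
  forall X : C, (exists f : Hom C X Z, True) /\ (forall f g : Hom C X Z, f = g).
Definition is_zero_obj (Z : C) : Prop := is_initial Z /\ is_terminal Z.

Definition pointed : Prop := exists Z : C, is_zero_obj Z.

Definition zero_arrow {a b : C} (f : Hom C a b) : Prop :=
  exists (Z : C) (z1 : Hom C a Z) (z2 : Hom C Z b), is_zero_obj Z /\ f = z2 ∘ z1.

Definition is_pullback {a b c : C} (f : Hom C a c) (g : Hom C b c)
    (P : C) (p1 : Hom C P a) (p2 : Hom C P b) : Prop :=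
  f ∘ p1 = g ∘ p2 /\
  forall (Q : C) (q1 : Hom C Q a) (q2 : Hom C Q b), f ∘ q1 = g ∘ q2 ->
    exists u : Hom C Q P, p1 ∘ u = q1 /\ p2 ∘ u = q2 /\
      forall v : Hom C Q P, p1 ∘ v = q1 -> p2 ∘ v = q2 -> v = u.

Definition has_pullbacks : Prop :=
  forall (a b c : C) (f : Hom C a c) (g : Hom C b c),
    exists (P : C) (p1 : Hom C P a) (p2 : Hom C P b), is_pullback f g P p1 p2.

Definition has_terminal : Prop := exists T : C, is_terminal T.

Definition finitely_complete : Prop := has_terminal /\ has_pullbacks.

Definition is_coequalizer {a b c : C} (f g : Hom C a b) (q : Hom C b c) : Prop :=
  q ∘ f = q ∘ g /\
  forall (d : C) (h : Hom C b d), h ∘ f = h ∘ g ->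
    exists u : Hom C c d, u ∘ q = h /\ forall v : Hom C c d, v ∘ q = h -> v = u.

Definition regular_epi {b c : C} (q : Hom C b c) : Prop :=
  exists (a : C) (f g : Hom C a b), is_coequalizer f g q.

Definition regular : Prop :=
  finitely_complete /\
  (forall (a b : C) (f : Hom C a b) (P : C) (p1 p2 : Hom C P a),
      is_pullback f f P p1 p2 ->
      exists (Q : C) (q : Hom C a Q), is_coequalizer p1 p2 q) /\
  (forall (a b c : C) (q : Hom C a c) (g : Hom C b c)
          (P : C) (p1 : Hom C P a) (p2 : Hom C P b),
      regular_epi q -> is_pullback q g P p1 p2 -> regular_epi p2).

Definition equivalence_relation {X R : C} (r1 r2 : Hom C R X) : Prop :=
  (forall (Y : C) (u v : Hom C Y R), r1 ∘ u = r1 ∘ v -> r2 ∘ u = r2 ∘ v -> u = v) /\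
  (exists d : Hom C X R, r1 ∘ d = idm X /\ r2 ∘ d = idm X) /\
  (exists s : Hom C R R, r1 ∘ s = r2 /\ r2 ∘ s = r1) /\
  (forall (P : C) (p1 p2 : Hom C P R), is_pullback r2 r1 P p1 p2 ->
     exists t : Hom C P R, r1 ∘ t = r1 ∘ p1 /\ r2 ∘ t = r2 ∘ p2).

Definition effective {X R : C} (r1 r2 : Hom C R X) : Prop :=
  exists (Y : C) (f : Hom C X Y), is_pullback f f R r1 r2.

Definition exact : Prop :=
  regular /\
  forall (X R : C) (r1 r2 : Hom C R X), equivalence_relation r1 r2 -> effective r1 r2.

Definition is_kernel {K A B : C} (k : Hom C K A) (f : Hom C A B) : Prop :=
  zero_arrow (f ∘ k) /\
  forall (X : C) (x : Hom C X A), zero_arrow (f ∘ x) ->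
    exists y : Hom C X K, k ∘ y = x /\ forall y' : Hom C X K, k ∘ y' = x -> y' = y.

Definition normal_monic {K A : C} (k : Hom C K A) : Prop :=
  exists (B : C) (f : Hom C A B), is_kernel k f.

(* Bourn protomodularity, in its pointed form: the split short five lemma *)
Definition protomodular : Prop :=
  forall (K A B K' A' B' : C)
         (k : Hom C K A) (p : Hom C A B) (s : Hom C B A)
         (k' : Hom C K' A') (p' : Hom C A' B') (s' : Hom C B' A')
         (u : Hom C K K') (v : Hom C A A') (w : Hom C B B'),
    is_kernel k p -> p ∘ s = idm B ->
    is_kernel k' p' -> p' ∘ s' = idm B' ->
    v ∘ k = k' ∘ u -> p' ∘ v = w ∘ p -> v ∘ s = s' ∘ w ->
    is_iso u -> is_iso w -> is_iso v.

Definition is_coproduct {a b : C} (S : C) (i1 : Hom C a S) (i2 : Hom C b S) : Prop :=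
  forall (X : C) (f : Hom C a X) (g : Hom C b X),
    exists h : Hom C S X, h ∘ i1 = f /\ h ∘ i2 = g /\
      forall h' : Hom C S X, h' ∘ i1 = f -> h' ∘ i2 = g -> h' = h.

Definition has_binary_coproducts : Prop :=
  forall a b : C, exists (S : C) (i1 : Hom C a S) (i2 : Hom C b S), is_coproduct S i1 i2.

Definition semi_abelian : Prop :=
  pointed /\ exact /\ protomodular /\ has_binary_coproducts.

Definition essential_monic {I A : C} (m : Hom C I A) : Prop :=
  monic m /\ forall (X : C) (g : Hom C A X), monic (g ∘ m) -> monic g.

Definition perp {J I A : C} (g : Hom C J A) (m : Hom C I A) : Prop :=
  forall (P : C) (p1 : Hom C P J) (p2 : Hom C P I),
    is_pullback g m P p1 p2 -> is_zero_obj P.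

End Notions.

Arguments monic {C a b} f.
Arguments is_iso {C a b} f.
Arguments zero_arrow {C a b} f.
Arguments is_pullback {C a b c} f g P p1 p2.
Arguments is_coequalizer {C a b c} f g q.
Arguments regular_epi {C b c} q.
Arguments equivalence_relation {C X R} r1 r2.
Arguments effective {C X R} r1 r2.
Arguments is_kernel {C K A B} k f.
Arguments normal_monic {C K A} k.
Arguments is_coproduct {C a b} S i1 i2.
Arguments essential_monic {C I A} m.
Arguments perp {C J I A} g m.

(* Main.v *)
Require Import Defs.
From Stdlib Require Import Setoid.

Ltac nrm := repeat rewrite comp_assoc; repeat rewrite comp_id_l; repeat rewrite comp_id_r.
Ltac nrmin H := repeat rewrite comp_assoc in H; repeat rewrite comp_id_l in H; repeat rewrite comp_id_r in H.

Section Basics.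
Variable C : Cat.
Variable Z : C.
Hypothesis HZ : is_zero_obj C Z.

Lemma toZ_ex (X : C) : exists t : Hom C X Z, True.
Proof. destruct HZ as [_ H]. apply (H X). Qed.
Lemma fromZ_ex (X : C) : exists t : Hom C Z X, True.
Proof. destruct HZ as [H _]. apply (H X). Qed.
Lemma toZ_uniq (X : C) (f g : Hom C X Z) : f = g.
Proof. destruct HZ as [_ H]. apply (H X). Qed.
Lemma fromZ_uniq (X : C) (f g : Hom C Z X) : f = g.
Proof. destruct HZ as [H _]. apply (H X). Qed.

Lemma zero_unique {X Y : C} (f g : Hom C X Y) : zero_arrow f -> zero_arrow g -> f = g.
Proof.
  intros [Z1 [z1 [z2 [H1 ->]]]] [Z2 [w1 [w2 [H2 ->]]]].
  destruct (proj1 (proj1 H2 Z1)) as [t _].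
  assert (E1 : z1 = t ∘ w1) by (apply (proj2 (proj2 H1 X))).
  assert (E2 : z2 ∘ t = w2) by (apply (proj2 (proj1 H2 Y))).
  rewrite E1, comp_assoc, E2. reflexivity.
Qed.

Lemma zero_ex (X Y : C) : exists f : Hom C X Y, zero_arrow f.
Proof.
  destruct (toZ_ex X) as [t _]. destruct (fromZ_ex Y) as [z _].
  exists (z ∘ t). exists Z, t, z. split; auto.
Qed.

Lemma zero_l {X Y W : C} (f : Hom C X Y) (g : Hom C Y W) : zero_arrow f -> zero_arrow (g ∘ f).
Proof. intros [Z1 [z1 [z2 [H1 ->]]]]. exists Z1, z1, (g ∘ z2). split; auto. apply comp_assoc. Qed.
Lemma zero_r {X Y W : C} (f : Hom C X Y) (h : Hom C W X) : zero_arrow f -> zero_arrow (f ∘ h).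
Proof. intros [Z1 [z1 [z2 [H1 ->]]]]. exists Z1, (z1 ∘ h), z2. split; auto. symmetry; apply comp_assoc. Qed.

Lemma zero_obj_out {X W : C} (f : Hom C W X) : is_zero_obj C W -> zero_arrow f.
Proof. intros H. exists W, (idm W), f. split; auto. symmetry; apply comp_id_r. Qed.
Lemma zero_obj_in {X W : C} (f : Hom C X W) : is_zero_obj C W -> zero_arrow f.
Proof. intros H. exists W, f, (idm W). split; auto. symmetry; apply comp_id_l. Qed.

Lemma monic_zero {X Y W : C} (f : Hom C Y W) (x : Hom C X Y) :
  monic f -> zero_arrow (f ∘ x) -> zero_arrow x.
Proof.
  intros Hf Hx. destruct (zero_ex X Y) as [z Hz].
  assert (x = z) as ->; auto. apply Hf. apply zero_unique; auto. apply zero_l; auto.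
Qed.

Lemma subterminal_zero (P : C) : (forall Y (u v : Hom C Y P), u = v) -> is_zero_obj C P.
Proof.
  intros H. destruct (toZ_ex P) as [tP _]. destruct (fromZ_ex P) as [zP _].
  split.
  - intros Y. destruct (fromZ_ex Y) as [zY _]. split. exists (zY ∘ tP); auto.
    intros f g. rewrite <- (comp_id_r _ _ _ f), <- (comp_id_r _ _ _ g).
    rewrite (H _ (idm P) (zP ∘ tP)). rewrite !comp_assoc. f_equal. apply fromZ_uniq.
  - intros Y. destruct (toZ_ex Y) as [tY _]. split. exists (zP ∘ tY); auto. apply H.
Qed.

Lemma pb_ex {a b c P : C} {f : Hom C a c} {g : Hom C b c} {p1 : Hom C P a} {p2 : Hom C P b} :
  is_pullback f g P p1 p2 -> forall Q (q1 : Hom C Q a) (q2 : Hom C Q b), f ∘ q1 = g ∘ q2 ->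
  exists u, p1 ∘ u = q1 /\ p2 ∘ u = q2.
Proof. intros [_ H] Q q1 q2 E. destruct (H Q q1 q2 E) as [u [? [? _]]]. eauto. Qed.

Lemma pb_jm {a b c P : C} {f : Hom C a c} {g : Hom C b c} {p1 : Hom C P a} {p2 : Hom C P b} :
  is_pullback f g P p1 p2 -> forall Q (u v : Hom C Q P), p1 ∘ u = p1 ∘ v -> p2 ∘ u = p2 ∘ v -> u = v.
Proof.
  intros [Hc H] Q u v E1 E2.
  assert (E : f ∘ (p1 ∘ v) = g ∘ (p2 ∘ v)) by (rewrite !comp_assoc, Hc; reflexivity).
  destruct (H Q _ _ E) as [w [_ [_ Hu]]].
  rewrite (Hu u E1 E2), (Hu v eq_refl eq_refl). reflexivity.
Qed.

Lemma pb_mono {a b c P : C} {f : Hom C a c} {g : Hom C b c} {p1 : Hom C P a} {p2 : Hom C P b} :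
  is_pullback f g P p1 p2 -> monic g -> monic p1.
Proof.
  intros Hp Hg Q u v E. apply (pb_jm Hp); auto. apply Hg.
  destruct Hp as [Hc _]. rewrite !comp_assoc, <- Hc, <- !comp_assoc, E. reflexivity.
Qed.

Lemma kernel_monic {K A B : C} (k : Hom C K A) (f : Hom C A B) : is_kernel k f -> monic k.
Proof.
  intros [H0 H] X u v E.
  assert (Hz : zero_arrow (f ∘ (k ∘ v))) by (rewrite comp_assoc; apply zero_r; auto).
  destruct (H X _ Hz) as [y [_ Hy]]. rewrite (Hy u E), (Hy v eq_refl). reflexivity.
Qed.

Lemma kernel_factor {K A B X : C} {k : Hom C K A} {f : Hom C A B} (x : Hom C X A) :
  is_kernel k f -> zero_arrow (f ∘ x) -> exists y, k ∘ y = x.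
Proof. intros [_ H] Hx. destruct (H X x Hx) as [y [? _]]. eauto. Qed.

Lemma normal_monic_monic {K A : C} (k : Hom C K A) : normal_monic k -> monic k.
Proof. intros [B [f H]]. eapply kernel_monic; eauto. Qed.

Hypothesis Hpb : has_pullbacks C.

Lemma kernel_ex {A B : C} (f : Hom C A B) : exists K (k : Hom C K A), is_kernel k f.
Proof.
  destruct (fromZ_ex B) as [z _].
  destruct (Hpb _ _ _ f z) as [P [p1 [p2 Hp]]].
  exists P, p1. split.
  - destruct Hp as [Hc _]. rewrite Hc. exists Z, p2, z. split; auto.
  - intros X x Hx. destruct (toZ_ex X) as [t _].
    assert (E : f ∘ x = z ∘ t) by (apply zero_unique; auto; exists Z, t, z; split; auto).
    destruct Hp as [Hc H]. destruct (H X x t E) as [u [E1 [E2 Hu]]].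
    exists u. split; auto. intros y' Ey. apply Hu; auto. apply toZ_uniq.
Qed.

Lemma prod_ex (U V : C) : exists P (p1 : Hom C P U) (p2 : Hom C P V),
  (forall Y (a : Hom C Y U) (b : Hom C Y V), exists h, p1 ∘ h = a /\ p2 ∘ h = b) /\
  (forall Y (u v : Hom C Y P), p1 ∘ u = p1 ∘ v -> p2 ∘ u = p2 ∘ v -> u = v).
Proof.
  destruct (toZ_ex U) as [tU _]. destruct (toZ_ex V) as [tV _].
  destruct (Hpb _ _ _ tU tV) as [P [p1 [p2 Hp]]].
  exists P, p1, p2. split.
  - intros Y a b. apply (pb_ex Hp). apply toZ_uniq.
  - apply (pb_jm Hp).
Qed.


Hypothesis Hcoeq : forall (a b : C) (f : Hom C a b) (P : C) (p1 p2 : Hom C P a),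
      is_pullback f f P p1 p2 -> exists (Q : C) (q : Hom C a Q), is_coequalizer p1 p2 q.
Hypothesis Hstab : forall (a b c : C) (q : Hom C a c) (g : Hom C b c)
          (P : C) (p1 : Hom C P a) (p2 : Hom C P b),
      regular_epi q -> is_pullback q g P p1 p2 -> regular_epi p2.
Hypothesis Hproto : protomodular C.

Lemma iso_id (X : C) : is_iso (idm X).
Proof. exists (idm X). split; apply comp_id_l. Qed.

Lemma tk_monic {A X : C} (h : Hom C A X) :
  (forall Y (x : Hom C Y A), zero_arrow (h ∘ x) -> zero_arrow x) -> monic h.
Proof.
  intros Hk.
  destruct (Hpb _ _ _ h h) as [R [p1 [p2 Hp]]].
  destruct (pb_ex Hp A (idm A) (idm A) eq_refl) as [d [Ed1 Ed2]].
  destruct (fromZ_ex A) as [zA _]. destruct (fromZ_ex R) as [zR _].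
  assert (Kid : is_kernel zA (idm A)).
  { split. apply zero_obj_out; auto.
    intros Y x Hx. destruct (toZ_ex Y) as [t _]. exists t. split.
    - apply zero_unique. exists Z, t, zA; split; auto. rewrite comp_id_l in Hx; auto.
    - intros; apply toZ_uniq. }
  assert (Kp1 : is_kernel zR p1).
  { split. apply zero_l, zero_obj_out; auto.
    intros Y x Hx. destruct (toZ_ex Y) as [t _]. exists t. split.
    - apply (pb_jm Hp).
      + apply zero_unique; auto. rewrite comp_assoc. apply zero_r, zero_l, zero_obj_out; auto.
      + apply zero_unique. rewrite comp_assoc. apply zero_r, zero_l, zero_obj_out; auto.
        apply Hk. destruct Hp as [Hc _]. rewrite comp_assoc, <- Hc, <- comp_assoc.
        apply zero_l; auto.
    - intros; apply toZ_uniq. }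
  assert (Hi : is_iso d).
  { eapply (Hproto _ _ _ _ _ _ zA (idm A) (idm A) zR p1 d (idm Z) d (idm A)); auto.
    all: try apply iso_id; try apply fromZ_uniq; nrm; auto. }
  destruct Hi as [g [Hg1 Hg2]].
  assert (E : p1 = p2).
  { rewrite <- (comp_id_r _ _ _ p1), <- (comp_id_r _ _ _ p2), <- Hg2, !comp_assoc, Ed1, Ed2. reflexivity. }
  intros Y u v Euv. destruct (pb_ex Hp Y u v Euv) as [w [E1 E2]].
  rewrite <- E1, <- E2, E. reflexivity.
Qed.

Lemma re_epi {X Y W : C} (c : Hom C X Y) : regular_epi c -> forall (u v : Hom C Y W), u ∘ c = v ∘ c -> u = v.
Proof.
  intros [A0 [al [be [Hc H]]]] u v E.
  assert (Hu : (u ∘ c) ∘ al = (u ∘ c) ∘ be) by (rewrite <- !comp_assoc, Hc; reflexivity).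
  destruct (H W (u ∘ c) Hu) as [w [_ Hw]].
  rewrite (Hw u eq_refl), (Hw v (eq_sym E)). reflexivity.
Qed.

Lemma cover {X T Y : C} (e : Hom C X T) (v : Hom C Y T) : regular_epi e ->
  exists Y' (c : Hom C Y' Y) (a : Hom C Y' X), regular_epi c /\ e ∘ a = v ∘ c.
Proof.
  intros He. destruct (Hpb _ _ _ e v) as [P [p1 [p2 Hp]]].
  exists P, p2, p1. split. eapply Hstab; eauto. apply Hp.
Qed.

Lemma desc {X X' T Q : C} (c : Hom C X X') (t1 t2 : Hom C T Q) (F1 F2 : Hom C X' Q) :
  regular_epi c ->
  (forall Y (u v : Hom C Y T), t1 ∘ u = t1 ∘ v -> t2 ∘ u = t2 ∘ v -> u = v) ->
  (exists y, t1 ∘ y = F1 ∘ c /\ t2 ∘ y = F2 ∘ c) ->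
  exists y', t1 ∘ y' = F1 /\ t2 ∘ y' = F2.
Proof.
  intros Hc Hjm [y [E1 E2]].
  pose proof (fun W => @re_epi _ _ W c Hc) as Hepi.
  destruct Hc as [A0 [al [be [Hc H]]]].
  assert (Hy : y ∘ al = y ∘ be).
  { apply Hjm.
    - rewrite !comp_assoc, E1, <- !comp_assoc, Hc. reflexivity.
    - rewrite !comp_assoc, E2, <- !comp_assoc, Hc. reflexivity. }
  destruct (H T y Hy) as [y' [Ey' _]].
  exists y'. split; apply Hepi; rewrite <- comp_assoc, Ey'; auto.
Qed.

Lemma image_ex {X Y : C} (g : Hom C X Y) : exists M (e : Hom C X M) (n : Hom C M Y),
  regular_epi e /\ monic n /\ n ∘ e = g.
Proof.
  destruct (Hpb _ _ _ g g) as [P [p1 [p2 Hp]]].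
  destruct (Hcoeq _ _ g P p1 p2 Hp) as [M [e He]].
  assert (Hre : regular_epi e) by (exists P, p1, p2; auto).
  destruct He as [Hc H].
  destruct (H Y g (proj1 Hp)) as [n [En _]].
  exists M, e, n. split; auto. split; auto.
  intros Y0 u v Euv.
  destruct (cover e u Hre) as [Y1 [c1 [a [Hc1 Ea]]]].
  destruct (cover e (v ∘ c1) Hre) as [Y2 [c2 [b [Hc2 Eb]]]].
  assert (Eg : g ∘ (a ∘ c2) = g ∘ b).
  { rewrite <- En, <- !comp_assoc, (comp_assoc _ _ _ _ _ e a), Ea, Eb.
    rewrite !comp_assoc, Euv. reflexivity. }
  destruct (pb_ex Hp _ _ _ Eg) as [w [Ew1 Ew2]].
  assert (E : e ∘ (a ∘ c2) = e ∘ b) by (rewrite <- Ew1, <- Ew2, !comp_assoc, Hc; reflexivity).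
  rewrite comp_assoc, Ea, Eb, <- comp_assoc in E.
  apply (re_epi c1 Hc1). apply (re_epi c2 Hc2). nrm; nrmin E; exact E.
Qed.

Lemma lemJ {P B K N : C} (p : Hom C P B) (s : Hom C B P) (i : Hom C K P) (n : Hom C N P) :
  is_kernel i p -> p ∘ s = idm B -> monic n ->
  (exists i', n ∘ i' = i) -> (exists s', n ∘ s' = s) -> is_iso n.
Proof.
  intros Hk Hs Hn [i' Ei] [s' Es].
  apply (Hproto _ _ _ _ _ _ i' (p ∘ n) s' i p s (idm K) n (idm B)); auto.
  - split.
    + rewrite <- comp_assoc, Ei. apply Hk.
    + intros X x Hx. rewrite <- comp_assoc in Hx.
      destruct Hk as [_ Hk]. destruct (Hk X _ Hx) as [y [Ey Hy]].
      exists y. split.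
      * apply Hn. rewrite comp_assoc, Ei; auto.
      * intros y' Ey'. apply Hy. rewrite <- Ei, <- comp_assoc, Ey'. reflexivity.
  - rewrite <- comp_assoc, Es; auto.
  - rewrite comp_id_r; auto.
  - rewrite comp_id_l; auto.
  - rewrite comp_id_r; auto.
  - apply iso_id.
  - apply iso_id.
Qed.

Lemma iso_surj {N P Y : C} (n : Hom C N P) (x : Hom C Y P) : is_iso n -> exists y, n ∘ y = x.
Proof. intros [g [_ Hg]]. exists (g ∘ x). rewrite comp_assoc, Hg, comp_id_l; auto. Qed.

Ltac gen H :=
  match type of H with
  | @eq (Hom ?C ?a ?b) ?l ?r =>
    let H' := fresh H "x" in
    assert (H' : forall W (x : Hom C b W), x ∘ l = x ∘ r) by (intros; rewrite H; reflexivity);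
    repeat setoid_rewrite comp_assoc in H'
  end.

Lemma ML {A B Cc K : C} (phi : Hom C A B) (psi : Hom C A Cc) (k : Hom C K A) :
  is_kernel k phi ->
  forall Y (x y y' : Hom C Y A), psi ∘ x = psi ∘ y -> phi ∘ y = phi ∘ y' ->
  exists Y' (c : Hom C Y' Y) (w : Hom C Y' A),
    regular_epi c /\ phi ∘ (x ∘ c) = phi ∘ w /\ psi ∘ w = psi ∘ (y' ∘ c).
Proof.
  intros Hk.
  destruct (Hpb _ _ _ psi psi) as [S [s1 [s2 HS]]].
  destruct (Hpb _ _ _ phi phi) as [R [r1 [r2 HR]]].
  destruct (Hpb _ _ _ s2 r1) as [D [dS [dR HD]]].
  assert (HDc : s2 ∘ dS = r1 ∘ dR) by apply HD.
  assert (HSc : psi ∘ s1 = psi ∘ s2) by apply HS.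
  assert (HRc : phi ∘ r1 = phi ∘ r2) by apply HR.
  gen HDc. gen HSc. gen HRc.
  assert (Dintro : forall Y0 (x y z : Hom C Y0 A), psi ∘ x = psi ∘ y -> phi ∘ y = phi ∘ z ->
            exists d, s1 ∘ dS ∘ d = x /\ s2 ∘ dS ∘ d = y /\ r2 ∘ dR ∘ d = z).
  { intros Y0 x y z E1 E2.
    destruct (pb_ex HS _ _ _ E1) as [sg [Es1 Es2]].
    destruct (pb_ex HR _ _ _ E2) as [rh [Er1 Er2]].
    assert (E3 : s2 ∘ sg = r1 ∘ rh) by (rewrite Es2, Er1; auto).
    destruct (pb_ex HD _ _ _ E3) as [d [Ed1 Ed2]].
    exists d. rewrite <- !comp_assoc, Ed1, Ed2. auto. }
  assert (Djm : forall Y0 (u v : Hom C Y0 D), s1 ∘ dS ∘ u = s1 ∘ dS ∘ v -> s2 ∘ dS ∘ u = s2 ∘ dS ∘ v ->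
            r2 ∘ dR ∘ u = r2 ∘ dR ∘ v -> u = v).
  { intros Y0 u v E1 E2 E3. apply (pb_jm HD).
    - apply (pb_jm HS); nrm; auto.
    - apply (pb_jm HR); nrm; auto. rewrite <- !HDc. auto. }
  destruct (prod_ex B Cc) as [BC [pb [pc [Hpe Hpj]]]].
  destruct (Hpe _ (phi ∘ (s1 ∘ dS)) (psi ∘ (r2 ∘ dR))) as [h1 [Eh11 Eh12]].
  destruct (Hpe _ phi psi) as [h2 [Eh21 Eh22]].
  gen Eh11. gen Eh12. gen Eh21. gen Eh22.
  destruct (Hpb _ _ _ h1 h2) as [D' [pi [om HD']]].
  assert (HD'c : h1 ∘ pi = h2 ∘ om) by apply HD'. gen HD'c.
  destruct (image_ex pi) as [M [e' [n' [He' [Hn' En']]]]].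
  assert (Good : forall Y0 (d : Hom C Y0 D) (w : Hom C Y0 A),
            phi ∘ s1 ∘ dS ∘ d = phi ∘ w -> psi ∘ w = psi ∘ r2 ∘ dR ∘ d -> exists j, n' ∘ j = d).
  { intros Y0 d w E1 E2.
    assert (E : h1 ∘ d = h2 ∘ w).
    { apply Hpj; nrm.
      - rewrite ?Eh11, ?Eh11x, ?Eh21, ?Eh21x. nrm. auto.
      - rewrite ?Eh12, ?Eh12x, ?Eh22, ?Eh22x. nrm. auto. }
    destruct (pb_ex HD' _ _ _ E) as [d' [Ed1 Ed2]].
    exists (e' ∘ d'). rewrite comp_assoc, En'. auto. }
  destruct (Dintro A (idm A) (idm A) (idm A) eq_refl eq_refl) as [Dl [EDl1 [EDl2 EDl3]]].
  destruct (kernel_ex (s2 ∘ dS)) as [E [eps Heps]].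
  assert (Ez : zero_arrow (s2 ∘ dS ∘ eps)) by apply Heps.
  assert (Hrho : zero_arrow (phi ∘ (r2 ∘ dR ∘ eps))).
  { nrm. rewrite <- ?HRc, <- ?HRcx, <- ?HDc, <- ?HDcx. rewrite <- !comp_assoc. apply zero_l. nrm. auto. }
  destruct (kernel_factor _ Hk Hrho) as [rho Erho].
  destruct (zero_ex K A) as [zKA HzKA].
  assert (Ek1 : psi ∘ zKA = psi ∘ zKA) by auto.
  assert (Ek2 : phi ∘ zKA = phi ∘ k) by (apply zero_unique; [apply zero_l; auto | apply Hk]).
  destruct (Dintro K zKA zKA k Ek1 Ek2) as [dk [Edk1 [Edk2 Edk3]]].
  gen Edk1. gen Edk3.
  assert (Hks : zero_arrow (s2 ∘ dS ∘ dk)) by (rewrite Edk2; auto).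
  destruct (kernel_factor _ Heps Hks) as [ks Eks].
  gen Eks. gen Erho.
  assert (Hrks : rho ∘ ks = idm K).
  { apply (kernel_monic _ _ Hk). nrm. rewrite ?Erho, ?Erhox. nrm. rewrite ?Eks, ?Eksx. rewrite Edk3. auto. }
  destruct (kernel_ex rho) as [E0 [io Hio]].
  destruct (Hpb _ _ _ eps n') as [Me [mu1 [mu2 HMe]]].
  assert (Hmu1 : monic mu1) by (eapply pb_mono; eauto).
  assert (Hmu : is_iso mu1).
  { apply (lemJ rho ks io mu1 Hio Hrks Hmu1).
    - assert (G : exists j, n' ∘ j = eps ∘ io).
      { apply (Good _ _ (s1 ∘ dS ∘ eps ∘ io)).
        - nrm. auto.
        - apply zero_unique.
          + nrm. rewrite ?HSc, ?HScx. rewrite <- !comp_assoc. apply zero_l. nrm. apply zero_r. auto.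
          + nrm. rewrite <- Erhox. rewrite <- !comp_assoc. apply zero_l, zero_l.
            apply Hio. }
      destruct G as [j Ej]. destruct (pb_ex HMe _ _ _ (eq_sym Ej)) as [i' [Ei' _]]. eauto.
    - assert (G : exists j, n' ∘ j = eps ∘ ks).
      { rewrite Eks. apply (Good _ _ k).
        - rewrite Edk1x. apply zero_unique.
          apply zero_l; auto. apply Hk.
        - rewrite Edk3x. auto. }
      destruct G as [j Ej]. destruct (pb_ex HMe _ _ _ (eq_sym Ej)) as [i' [Ei' _]]. eauto. }
  assert (Hn'iso : is_iso n').
  { apply (lemJ (s2 ∘ dS) Dl eps n' Heps EDl2 Hn').
    - destruct Hmu as [g [Hg1 Hg2]]. exists (mu2 ∘ g).
      assert (HMc : eps ∘ mu1 = n' ∘ mu2) by apply HMe.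
      rewrite comp_assoc, <- HMc, <- comp_assoc, Hg2, comp_id_r. auto.
    - gen EDl1. gen EDl3. apply (Good _ _ (idm A)); nrm; rewrite ?EDl1x, ?EDl3x; nrm; auto. }
  intros Y x y y' E1 E2.
  destruct (Dintro Y x y y' E1 E2) as [d [Ed1 [Ed2 Ed3]]].
  destruct (iso_surj n' d Hn'iso) as [j Ej].
  destruct (cover e' j He') as [Y' [c [d'' [Hc Ed'']]]].
  assert (Epd : pi ∘ d'' = d ∘ c) by (rewrite <- En', <- comp_assoc, Ed'', comp_assoc, Ej; auto).
  gen Epd.
  exists Y', c, (om ∘ d''). split; auto. split.
  - rewrite <- Ed1. nrm. nrmin Eh11. nrmin Eh21. rewrite <- Epdx, <- Eh11, HD'cx, Eh21. auto.
  - rewrite <- Ed3. nrm. nrmin Eh12. nrmin Eh22. rewrite <- Epdx, <- Eh12, HD'cx, Eh22. auto.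
Qed.

Hypothesis Heff : forall (X R : C) (r1 r2 : Hom C R X), equivalence_relation r1 r2 -> effective r1 r2.

Lemma key {K I A B Cc : C} (k : Hom C K A) (phi : Hom C A B) (m : Hom C I A) (psi : Hom C A Cc) :
  is_kernel k phi -> is_kernel m psi -> perp k m ->
  exists Q (q : Hom C A Q), zero_arrow (q ∘ k) /\ normal_monic (q ∘ m).
Proof.
  intros Hk Hm Hperp.
  destruct (Hpb _ _ _ phi phi) as [R [r1 [r2 HR]]].
  destruct (Hcoeq _ _ phi R r1 r2 HR) as [Q [q Hq]].
  assert (Hqre : regular_epi q) by (exists R, r1, r2; auto).
  destruct Hq as [Hqc Hqu].
  destruct (Hqu B phi (proj1 HR)) as [phi' [Ephi _]].
  gen Ephi. nrmin Ephix.
  assert (Qeq : forall Y (a b : Hom C Y A), phi ∘ a = phi ∘ b -> q ∘ a = q ∘ b).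
  { intros Y a b E. destruct (pb_ex HR _ _ _ E) as [w [Ew1 Ew2]].
    rewrite <- Ew1, <- Ew2, !comp_assoc, Hqc. auto. }
  assert (kerq : forall Y (u : Hom C Y A), zero_arrow (q ∘ u) -> exists y, k ∘ y = u).
  { intros Y u Hu. apply (kernel_factor _ Hk). rewrite <- Ephi, <- comp_assoc. apply zero_l; auto. }
  assert (Hqk : zero_arrow (q ∘ k)).
  { destruct (zero_ex K A) as [z Hz]. rewrite (Qeq _ k z). apply zero_l; auto.
    apply zero_unique. apply Hk. apply zero_l; auto. }
  assert (Hqm : monic (q ∘ m)).
  { apply tk_monic. intros Y x Hx. rewrite <- comp_assoc in Hx.
    destruct (kerq _ _ Hx) as [y Ey].
    destruct (Hpb _ _ _ k m) as [P [p1 [p2 HP]]].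
    pose proof (Hperp P p1 p2 HP) as HPz.
    destruct (pb_ex HP _ _ _ Ey) as [u [_ Eu]].
    rewrite <- Eu. apply zero_r. apply zero_obj_out; auto. }
  destruct (Hpb _ _ _ psi psi) as [S [s1 [s2 HS]]].
  assert (HSc : psi ∘ s1 = psi ∘ s2) by apply HS. gen HSc.
  destruct (pb_ex HS A (idm A) (idm A) eq_refl) as [dS [EdS1 EdS2]].
  destruct (pb_ex HS S s2 s1 (eq_sym HSc)) as [sw [Esw1 Esw2]].
  assert (Lgen : forall Y (sg : Hom C Y S) (ka : Hom C Y K), k ∘ ka = s1 ∘ sg ->
             exists j, q ∘ s2 ∘ sg = q ∘ m ∘ j).
  { destruct (Hpb _ _ _ k s1) as [L [l1 [l2 HL]]].
    assert (HLc : k ∘ l1 = s1 ∘ l2) by apply HL. gen HLc.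
    assert (Es : k ∘ idm K = s1 ∘ (dS ∘ k)) by (rewrite comp_assoc, EdS1; nrm; auto).
    destruct (pb_ex HL _ _ _ Es) as [sec [Esec1 Esec2]].
    destruct (kernel_ex l1) as [L0 [io Hio]].
    destruct (Hpb _ _ _ (q ∘ s2 ∘ l2) (q ∘ m)) as [M [mu1 [mu2 HM]]].
    assert (Hmu1 : monic mu1) by (eapply pb_mono; eauto).
    assert (Hiso : is_iso mu1).
    { apply (lemJ l1 sec io mu1 Hio Esec1 Hmu1).
      - assert (Hz : zero_arrow (psi ∘ (s2 ∘ l2 ∘ io))).
        { nrm. rewrite <- ?HSc, <- ?HScx, <- ?HLc, <- ?HLcx. rewrite <- !comp_assoc. apply zero_l, zero_l. apply Hio. }
        destruct (kernel_factor _ Hm Hz) as [i Ei].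
        gen Ei. assert (E : q ∘ s2 ∘ l2 ∘ io = q ∘ m ∘ i) by (nrm; rewrite ?Eix; auto).
        destruct (pb_ex HM _ _ _ E) as [y [Ey _]]. eauto.
      - destruct (zero_ex K I) as [z Hz].
        assert (E : q ∘ s2 ∘ l2 ∘ sec = q ∘ m ∘ z).
        { apply zero_unique.
          - gen Esec2. gen EdS2. nrm. rewrite Esec2x, EdS2x. nrm. auto.
          - apply zero_l; auto. }
        destruct (pb_ex HM _ _ _ E) as [y [Ey _]]. eauto. }
    intros Y sg ka Eka.
    destruct (pb_ex HL _ _ _ Eka) as [l [El1 El2]].
    destruct (iso_surj mu1 l Hiso) as [l' El'].
    exists (mu2 ∘ l').
    assert (HMc : q ∘ s2 ∘ l2 ∘ mu1 = q ∘ m ∘ mu2) by apply HM.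
    rewrite <- El2, <- El', !comp_assoc, HMc. auto. }
  destruct (prod_ex Q Q) as [QQ [pq1 [pq2 [Hpe Hpj]]]].
  destruct (Hpe _ (q ∘ s1) (q ∘ s2)) as [g [Eg1 Eg2]].
  destruct (image_ex g) as [T [e [n [He [Hn En]]]]].
  assert (Te1 : pq1 ∘ n ∘ e = q ∘ s1) by (rewrite <- comp_assoc, En; auto).
  assert (Te2 : pq2 ∘ n ∘ e = q ∘ s2) by (rewrite <- comp_assoc, En; auto).
  gen Te1. gen Te2.
  assert (Tjm : forall Y (u v : Hom C Y T), pq1 ∘ n ∘ u = pq1 ∘ n ∘ v -> pq2 ∘ n ∘ u = pq2 ∘ n ∘ v -> u = v).
  { intros Y u v E1 E2. apply Hn. apply Hpj; nrm; auto. }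
  assert (Heq : equivalence_relation (pq1 ∘ n) (pq2 ∘ n)).
  { split; [| split; [| split]].
    - exact Tjm.
    - apply (desc q (pq1 ∘ n) (pq2 ∘ n) (idm Q) (idm Q) Hqre Tjm).
      exists (e ∘ dS). nrm. rewrite Te1, Te2. rewrite <- !comp_assoc, EdS1, EdS2. nrm. auto.
    - apply (desc e (pq1 ∘ n) (pq2 ∘ n) (pq2 ∘ n) (pq1 ∘ n) He Tjm).
      exists (e ∘ sw). nrm. rewrite Te1, Te2. rewrite <- !comp_assoc, Esw1, Esw2. auto.
    - intros P p1 p2 HP.
      assert (HPc : pq2 ∘ n ∘ p1 = pq1 ∘ n ∘ p2) by apply HP.
      destruct (cover e p1 He) as [U1 [c1 [a [Hc1 Ea]]]].
      destruct (cover e (p2 ∘ c1) He) as [U2 [c2 [b [Hc2 Eb]]]].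
      gen Ea. gen Eb. gen HPc.
      assert (E1 : q ∘ s2 ∘ a ∘ c2 = q ∘ s1 ∘ b).
      { rewrite <- Te2, <- Te1. nrm. rewrite ?Eax, ?HPc, ?HPcx, <- ?Ebx. nrm. auto. }
      assert (E2 : psi ∘ (s1 ∘ a ∘ c2) = psi ∘ (s2 ∘ a ∘ c2)) by (nrm; rewrite HSc; auto).
      assert (E3 : phi ∘ (s2 ∘ a ∘ c2) = phi ∘ (s1 ∘ b)) by (gen E1; rewrite <- !Ephi; nrm; rewrite E1x; auto).
      destruct (ML phi psi k Hk _ _ _ _ E2 E3) as [U3 [c3 [w [Hc3 [Ew1 Ew2]]]]].
      assert (E4 : psi ∘ w = psi ∘ (s2 ∘ b ∘ c3)) by (rewrite Ew2; nrm; rewrite HSc; auto).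
      destruct (pb_ex HS _ _ _ E4) as [sg [Esg1 Esg2]].
      apply (desc c1 _ _ (pq1 ∘ n ∘ p1) (pq2 ∘ n ∘ p2) Hc1 Tjm).
      apply (desc c2 _ _ (pq1 ∘ n ∘ p1 ∘ c1) (pq2 ∘ n ∘ p2 ∘ c1) Hc2 Tjm).
      apply (desc c3 _ _ (pq1 ∘ n ∘ p1 ∘ c1 ∘ c2) (pq2 ∘ n ∘ p2 ∘ c1 ∘ c2) Hc3 Tjm).
      exists (e ∘ sg). nrm. rewrite Te1, Te2. split.
      + rewrite <- !comp_assoc, Esg1. rewrite <- (Qeq _ _ _ Ew1). nrm.
        rewrite <- ?Eax. rewrite Te1. auto.
      + rewrite <- !comp_assoc, Esg2. nrm. rewrite <- Te2. rewrite Ebx. nrm. auto. }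
  destruct (Heff _ _ _ _ Heq) as [W [t HT]].
  assert (HTc : t ∘ (pq1 ∘ n) = t ∘ (pq2 ∘ n)) by apply HT.
  nrmin HTc. gen HTc.
  exists Q, q. split; auto. exists W, t. split.
  - destruct (zero_ex I A) as [z Hz].
    assert (E : psi ∘ z = psi ∘ m) by (apply zero_unique; [apply zero_l; auto | apply Hm]).
    destruct (pb_ex HS _ _ _ E) as [sg [Esg1 Esg2]].
    assert (E' : t ∘ (q ∘ m) = t ∘ q ∘ z).
    { rewrite <- Esg1, <- Esg2. nrm. rewrite <- Te1x, <- Te2x. rewrite ?HTc, ?HTcx. auto. }
    rewrite E'. apply zero_l; auto.
  - intros X x Hx.
    destruct (zero_ex X Q) as [zQ HzQ].
    assert (E : t ∘ zQ = t ∘ x) by (apply zero_unique; auto; apply zero_l; auto).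
    destruct (pb_ex HT _ _ _ E) as [v [Ev1 Ev2]].
    destruct (cover e v He) as [X1 [c [sg [Hc Esg]]]].
    gen Esg.
    assert (Hz : zero_arrow (q ∘ (s1 ∘ sg))).
    { rewrite comp_assoc, <- Te1, <- comp_assoc, Esg. nrm. rewrite Ev1. apply zero_r; auto. }
    destruct (kerq _ _ Hz) as [ka Eka].
    destruct (Lgen _ sg ka Eka) as [j Ej].
    assert (Hqmjm : forall Y (u v : Hom C Y I), q ∘ m ∘ u = q ∘ m ∘ v -> q ∘ m ∘ u = q ∘ m ∘ v -> u = v)
      by (intros; apply Hqm; auto).
    destruct (desc c (q ∘ m) (q ∘ m) x x Hc Hqmjm) as [y [Ey _]].
    { exists j. rewrite <- Ej, <- Te2. nrm. rewrite Esgx, Ev2. auto. }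
    exists y. split; auto. intros y' Ey'. apply Hqm. rewrite Ey, Ey'. auto.
Qed.

Lemma L12 {I A : C} (m : Hom C I A) : essential_monic m ->
  forall (B : C) (f : Hom C A B), normal_monic (f ∘ m) -> monic f.
Proof. intros [_ H] B f Hf. apply H. apply normal_monic_monic; auto. Qed.

Lemma L23 {I A : C} (m : Hom C I A) : normal_monic m ->
  (forall (B : C) (f : Hom C A B), normal_monic (f ∘ m) -> monic f) ->
  forall (J : C) (g : Hom C J A), normal_monic g -> perp g m -> zero_arrow g.
Proof.
  intros [Cc [psi Hm]] H2 J g [B [phi Hg]] Hperp.
  destruct (key g phi m psi Hg Hm Hperp) as [Q [q [Hqg Hqm]]].
  apply (monic_zero q g); auto.
Qed.

Lemma L31 {I A : C} (m : Hom C I A) : monic m ->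
  (forall (J : C) (g : Hom C J A), normal_monic g -> perp g m -> zero_arrow g) ->
  essential_monic m.
Proof.
  intros Hmm H3. split; auto. intros X h Hhm.
  destruct (kernel_ex h) as [K [k Hk]].
  assert (Hperp : perp k m).
  { intros P p1 p2 HP. assert (HPc : k ∘ p1 = m ∘ p2) by apply HP.
    assert (Hp2 : zero_arrow p2).
    { apply (monic_zero (h ∘ m)); auto. rewrite <- comp_assoc, <- HPc, comp_assoc.
      apply zero_r. apply Hk. }
    assert (Hp1 : zero_arrow p1).
    { apply (monic_zero k); auto. eapply kernel_monic; eauto. rewrite HPc. apply zero_l; auto. }
    apply subterminal_zero. intros Y u v. apply (pb_jm HP); apply zero_unique; apply zero_r; auto. }
  assert (Hkz : zero_arrow k) by (apply H3; auto; exists X, h; auto).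
  apply tk_monic. intros Y x Hx. destruct (kernel_factor _ Hk Hx) as [y Ey].
  rewrite <- Ey. apply zero_r; auto.
Qed.

End Basics.

Theorem mainTheorem6 (C : Cat) (HC : semi_abelian C)
    (I A : C) (m : Hom C I A) (Hm : normal_monic m) :
  (essential_monic m <->
     (forall (B : C) (f : Hom C A B), normal_monic (f ∘ m) -> monic f)) /\
  (essential_monic m <->
     (forall (J : C) (g : Hom C J A), normal_monic g -> perp g m -> zero_arrow g)).
Proof.
  destruct HC as [[Z HZ] [[[[_ Hpb] [Hcoeq Hstab]] Heff] [Hproto _]]].
  pose proof (L12 C m) as H12.
  pose proof (L23 C Z HZ Hpb Hcoeq Hstab Hproto Heff m Hm) as H23.
  pose proof (L31 C Z HZ Hpb Hproto m (normal_monic_monic C m Hm)) as H31.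
  split; split; auto.
Qed.
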